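(* Let $\mathscr{H}$ be a finite-dimensional complex Hilbert space, let $A=\{a_k\}_{k=1}^{m}$ be a tight frame of $\mathscr{H}$ with frame bound $\alpha>0$ and $B=\{b_j\}_{j=1}^{n}$ a tight frame of $\mathscr{H}$ with frame bound $\beta>0$, and suppose $A$ and $B$ are $s$-order incompatible. Let $$t_{\min}=\min\Big\{t\ :\ \text{for all } S\subsetneq I,\ T\subsetneq J \text{ with } |S|+|T|>t,\ \operatorname{span}\big(\{a_k\}_{k\in S}\cup\{b_j\}_{j\in T}\big)=\mathscr{H}\Big\},$$ where $I=\{1,\dots,m\}$ and $J=\{1,\dots,n\}$. Then $s+t_{\min}=m+n$.
   Context: A finite family $\{a_k\}_{k=1}^{m}\subset\mathscr{H}$ is a tight frame with frame bound $\alpha>0$ if $\sum_{k=1}^{m}|\langle x,a_k\rangle|^2=\alpha\|x\|^2$ for all $x\in\mathscr{H}$. The tight frames $A$ (bound $\alpha$) and $B$ (bound $\beta$) are called $s$-order incompatible, for an integer $s$, if: (1) for all nonempty $S\subseteq I$, $T\subseteq J$ with $|S|+|T|<s$ and every nonzero $x\in\mathscr{H}$, the two equalities $\sum_{k\in S}|\langle x,a_k\rangle|^2=\alpha\|x\|^2$ and $\sum_{j\in T}|\langle x,b_j\rangle|^2=\beta\|x\|^2$ do not both hold; and (2) there exist nonempty $S\subseteq I$, $T\subseteq J$ with $|S|+|T|=s$ and a nonzero $x\in\mathscr{H}$ for which both equalities hold. Spans are over $\mathbb{C}$; $S\subsetneq I$ denotes a proper (possibly empty) subset. *)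

(* Defs.v *)
From HB Require Import structures.
From mathcomp Require Import all_boot all_order all_algebra.
Set Implicit Arguments. Unset Strict Implicit. Unset Printing Implicit Defensive.
Import Order.TTheory GRing.Theory Num.Theory.
Local Open Scope ring_scope.

(* The finite-dimensional complex Hilbert space H is modelled as C^d = 'rV[C]_d
   with the standard inner product <x,y> = sum_i x_i * conj(y_i);
   C is any numeric algebraically closed field (e.g. the complex numbers). *)
Section Frames.
Variables (C : numClosedFieldType) (d : nat).

Definition dotp (x y : 'rV[C]_d) : C := \sum_(i < d) x 0 i * (y 0 i)^*.

Definition sqnorm (x : 'rV[C]_d) : C := dotp x x.

Definition frame_eq_on m (a : 'I_m -> 'rV[C]_d) (alpha : C)
    (S : {set 'I_m}) (x : 'rV[C]_d) : Prop :=
  \sum_(k in S) `|dotp x (a k)| ^+ 2 = alpha * sqnorm x.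

Definition tight_frame m (a : 'I_m -> 'rV[C]_d) (alpha : C) : Prop :=
  0 < alpha /\ forall x : 'rV[C]_d, frame_eq_on a alpha [set: 'I_m] x.

Definition s_order_incompatible m n (a : 'I_m -> 'rV[C]_d) (alpha : C)
    (b : 'I_n -> 'rV[C]_d) (beta : C) (s : nat) : Prop :=
  (forall (S : {set 'I_m}) (T : {set 'I_n}), S != set0 -> T != set0 ->
     (#|S| + #|T| < s)%N -> forall x : 'rV[C]_d, x != 0 ->
     ~ (frame_eq_on a alpha S x /\ frame_eq_on b beta T x))
  /\
  (exists (S : {set 'I_m}) (T : {set 'I_n}) (x : 'rV[C]_d),
     [/\ S != set0, T != set0, (#|S| + #|T|)%N = s, x != 0 &
         frame_eq_on a alpha S x /\ frame_eq_on b beta T x]).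

Definition spans_H m n (a : 'I_m -> 'rV[C]_d) (b : 'I_n -> 'rV[C]_d)
    (S : {set 'I_m}) (T : {set 'I_n}) : Prop :=
  (span ([seq a k | k in S] ++ [seq b j | j in T]) = fullv)%VS.

Definition spanning_threshold m n (a : 'I_m -> 'rV[C]_d)
    (b : 'I_n -> 'rV[C]_d) (t : nat) : Prop :=
  forall (S : {set 'I_m}) (T : {set 'I_n}),
    S != [set: 'I_m] -> T != [set: 'I_n] -> (t < #|S| + #|T|)%N ->
    spans_H a b S T.

End Frames.

(* Main.v *)
Require Import Defs.
From HB Require Import structures.
From mathcomp Require Import all_boot all_order all_algebra.
From mathcomp Require Import zify.
Set Implicit Arguments. Unset Strict Implicit. Unset Printing Implicit Defensive.
Import Order.TTheory GRing.Theory Num.Theory.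
Local Open Scope ring_scope.

Section Aux.
Variables (C : numClosedFieldType) (d : nat).
Implicit Types (x v : 'rV[C]_d) (X : seq 'rV[C]_d).

Lemma dotp_suml (I : finType) x (c : I -> C) (w : I -> 'rV[C]_d) :
  dotp x (\sum_i c i *: w i) = \sum_i (c i)^* * dotp x (w i).
Proof.
rewrite /dotp.
under eq_bigr => j _ do rewrite summxE rmorph_sum mulr_sumr.
rewrite exchange_big /=; apply: eq_bigr => i _.
rewrite mulr_sumr; apply: eq_bigr => j _.
by rewrite mxE rmorphM /= mulrCA.
Qed.

Lemma dotp_self0 x : dotp x x = 0 -> x = 0.
Proof.
rewrite /dotp => H.
have H2 : \sum_(j < d) `|x 0 j| ^+ 2 = 0.
  by rewrite -[RHS]H; apply: eq_bigr => j _; rewrite normCK.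
apply/rowP => j; rewrite mxE.
have Hz := psumr_eq0P (fun i _ => exprn_ge0 2 (normr_ge0 (x 0 i))) H2.
have := Hz j isT.
by move/eqP; rewrite expf_eq0 /= normr_eq0; move/eqP => ->.
Qed.

Lemma orth_zero X : span X = fullv ->
  forall x, (forall v, v \in X -> dotp x v = 0) -> x = 0.
Proof.
move=> HX x Hx.
have : x \in span (in_tuple X) by rewrite /= HX memvf.
move/coord_span => Ex.
apply: dotp_self0.
rewrite {2}Ex dotp_suml big1 // => i _.
by rewrite Hx ?mulr0 // mem_nth.
Qed.

Lemma zero_orth X :
  (forall x, (forall v, v \in X -> dotp x v = 0) -> x = 0) -> span X = fullv.
Proof.
move=> H.
pose M := \matrix_(i < size X) X`_i.
have K0 : kermx M^T = 0.
  apply/row_matrixP => i; rewrite row0.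
  set u := row i _.
  have Hu : u *m M^T = 0 by rewrite /u -row_mul mulmx_ker row0.
  have : map_mx Num.conj_op u = 0.
    apply: H => v /(nthP 0) [k Hk <-].
    have := congr1 (fun A : 'M[C]_(1, size X) => A 0 (Ordinal Hk)) Hu.
    rewrite !mxE /dotp => E.
    transitivity ((\sum_j u 0 j * M^T j (Ordinal Hk))^*); last by rewrite E conjC0.
    rewrite rmorph_sum; apply: eq_bigr => j _.
    by rewrite !mxE rmorphM.
  move/rowP => Hc; apply/rowP => j; have := Hc j.
  by rewrite !mxE => /(congr1 Num.conj_op); rewrite conjCK conjC0.
have Hr : \rank M = d.
  have := mxrank_ker M^T; rewrite K0 mxrank0 mxrank_tr => E.
  have := rank_leq_col M; lia.
apply/vspaceP => u; rewrite memvf.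
have : (u <= M)%MS by apply: submx_full; rewrite /row_full Hr.
case/submxP => D ->.
rewrite mulmx_sum_row; apply: memv_suml => i _.
apply: memvZ; rewrite rowK; apply: memv_span; exact: mem_nth.
Qed.
End Aux.

Lemma frame_compl (C : numClosedFieldType) (d m : nat) (a : 'I_m -> 'rV[C]_d)
  (alpha : C) (S : {set 'I_m}) (x : 'rV[C]_d) :
  tight_frame a alpha ->
  frame_eq_on a alpha S x <-> (forall k, k \in ~: S -> dotp x (a k) = 0).
Proof.
move=> [_ Hf]; have := Hf x; rewrite /frame_eq_on (big_setID S) setTI setTD => E.
split => [H|H].
- have E2 : \sum_(k in ~: S) `|dotp x (a k)| ^+ 2 = 0.
    by move: E; rewrite -H -[X in _ = X]addr0 => /addrI.
  move=> k kS.
  have := psumr_eq0P (fun i _ => exprn_ge0 2 (normr_ge0 (dotp x (a i)))) E2 kS.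
  by move/eqP; rewrite expf_eq0 /= normr_eq0 => /eqP.
- rewrite -E /= [X in _ + X]big1 ?addr0 // => k kS; by rewrite H // normr0 expr0n.
Qed.

Lemma spans_iff (C : numClosedFieldType) (d m n : nat)
  (a : 'I_m -> 'rV[C]_d) (b : 'I_n -> 'rV[C]_d) S T :
  spans_H a b S T <-> forall x, (forall k, k \in S -> dotp x (a k) = 0) ->
     (forall j, j \in T -> dotp x (b j) = 0) -> x = 0.
Proof.
split.
- move=> H x ha hb; apply: (orth_zero H) => v.
  by rewrite mem_cat => /orP [/imageP [k kS ->] | /imageP [j jT ->]]; auto.
- move=> H; apply: zero_orth => x Hx; apply: H => [k kS|j jT]; apply: Hx;
  by rewrite mem_cat ?image_f ?orbT.
Qed.

Theorem mainTheorem3 (C : numClosedFieldType) (d m n : nat)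
    (a : 'I_m -> 'rV[C]_d) (alpha : C) (b : 'I_n -> 'rV[C]_d) (beta : C)
    (s : nat) :
  tight_frame a alpha -> tight_frame b beta ->
  s_order_incompatible a alpha b beta s ->
  exists tmin : nat,
    [/\ spanning_threshold a b tmin,
        (forall t : nat, spanning_threshold a b t -> (tmin <= t)%N) &
        (s + tmin = m + n)%N].
Proof.
move=> HA HB [H1 [S0 [T0 [x0 [nS0 nT0 cST x0n [fa fb]]]]]].
have cS := cardsC S0; have cT := cardsC T0.
have mS := max_card (mem S0); have mT := max_card (mem T0).
rewrite card_ord in cS mS; rewrite card_ord in cT mT.
exists (m + n - s)%N; split.
- move=> S T nS nT lt; apply/spans_iff => x ha hb.
  case: (eqVneq x 0) => // xn; exfalso.
  have cS1 := cardsC S; have cT1 := cardsC T; rewrite card_ord in cS1; rewrite card_ord in cT1.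
  apply: (H1 (~: S) (~: T) _ _ _ x xn).
  + by apply: contra nS => /eqP E; rewrite -[S]setCK E setC0.
  + by apply: contra nT => /eqP E; rewrite -[T]setCK E setC0.
  + lia.
  + by split; apply/frame_compl; rewrite ?setCK.
- move=> t Ht; rewrite leqNgt; apply/negP => lt.
  have : spans_H a b (~: S0) (~: T0).
    apply: Ht.
    + by apply: contra nS0 => /eqP E; rewrite -[S0]setCK E setCT.
    + by apply: contra nT0 => /eqP E; rewrite -[T0]setCK E setCT.
    + lia.
  move/spans_iff => /(_ x0 ((frame_compl _ _ HA).1 fa) ((frame_compl _ _ HB).1 fb)) E.
  by rewrite E eqxx in x0n.
- lia.
Qed.
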